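(* Let $1\le r\le n$, $A\in\mathrm{SGL}_n(\mathbb{F}_2)$, and let $\mathbf{x}_1,\ldots,\mathbf{x}_r\in\mathbb{F}_2^n$ be linearly independent with $\mathbf{x}_i^{\top}A^{-1}\mathbf{x}_j=1$ for all $i,j$. If $\sum_{i=1}^r\mathbf{x}_i\mathbf{x}_i^{\top}=\sum_{i=1}^r\mathbf{y}_i\mathbf{y}_i^{\top}$ for some $\mathbf{y}_1,\ldots,\mathbf{y}_r\in\mathbb{F}_2^n$, then $\mathbf{y}_i^{\top}A^{-1}\mathbf{y}_j=1$ for all $i,j$.
   Context: $\mathrm{SGL}_n(\mathbb{F}_2)$ is the set of invertible symmetric $n\times n$ matrices over the binary field $\mathbb{F}_2$. *)

(* Defs.v *)
From mathcomp Require Import all_boot all_algebra.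
Set Implicit Arguments. Unset Strict Implicit. Unset Printing Implicit Defensive.
Import GRing.Theory.
Local Open Scope ring_scope.

Definition SGL (n : nat) : pred 'M['F_2]_n :=
  fun A => (A^T == A) && (A \in unitmx).
Arguments SGL n : clear implicits.

Definition bform (n : nat) (M : 'M['F_2]_n) (x y : 'cV['F_2]_n) : 'F_2 :=
  (x^T *m M *m y) 0 0.

(* Main.v *)
Require Import Defs.
From mathcomp Require Import all_boot all_algebra.
Import GRing.Theory.
Local Open Scope ring_scope.

Lemma F2sq (a : 'F_2) : a * a = a.
Proof. by case: a => [[|[|m]] //= Hm]; apply/val_inj. Qed.

Lemma sum_outer n r (x : 'I_r -> 'cV['F_2]_n) :
  \sum_(i < r) (x i *m (x i)^T) = (\matrix_(i < r) (x i)^T)^T *m (\matrix_(i < r) (x i)^T).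
Proof.
apply/matrixP => a b; rewrite summxE !mxE; apply: eq_bigr => i _.
by rewrite !mxE big_ord1 !mxE.
Qed.

Lemma bform_entry n r (B : 'M['F_2]_n) (x : 'I_r -> 'cV['F_2]_n) i j :
  bform B (x i) (x j) =
  ((\matrix_(i < r) (x i)^T) *m B *m (\matrix_(i < r) (x i)^T)^T) i j.
Proof.
rewrite /bform !mxE; apply: eq_bigr => k _; rewrite !mxE; congr (_ * _).
by apply: eq_bigr => l _; rewrite !mxE.
Qed.

Theorem lemma4p8 (n r : nat) (A : 'M['F_2]_n) (x y : 'I_r -> 'cV['F_2]_n) :
  (1 <= r)%N -> (r <= n)%N -> A \in SGL n ->
  row_free (\matrix_(i < r) (x i)^T) ->
  (forall i j, bform (invmx A) (x i) (x j) = 1) ->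
  \sum_(i < r) (x i *m (x i)^T) = \sum_(i < r) (y i *m (y i)^T) ->
  forall i j, bform (invmx A) (y i) (y j) = 1.
Proof.
move=> _ _ _ /row_freeP [W PW] hx.
rewrite !sum_outer => hS.
set P := \matrix_(i < r) (x i)^T in PW hx hS *.
set Q := \matrix_(i < r) (y i)^T in hS *.
set B := invmx A in hx *.
set J : 'M['F_2]_r := const_mx 1.
have hPB : P *m B *m P^T = J.
  by apply/matrixP => i j; rewrite -bform_entry hx mxE.
pose C := Q *m W.
have PtC : P^T = Q^T *m C by rewrite /C mulmxA -hS -mulmxA PW mulmx1.
have CtC : C^T *m C = 1%:M.
  have Pe : P = C^T *m Q by rewrite -[P]trmxK PtC trmx_mul trmxK.
  by rewrite -PW Pe -mulmxA.
have QV : Q *m (W *m C^T) = 1%:M by rewrite mulmxA (mulmx1C CtC).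
pose o : 'cV['F_2]_r := const_mx 1.
have Jo : J = o *m o^T.
  by apply/matrixP => i j; rewrite !mxE big_ord1 !mxE mulr1.
have diag (R : 'M['F_2]_(r, n)) k : (R^T *m o) k 0 = (R^T *m R) k k.
  by rewrite !mxE; apply: eq_bigr => i _; rewrite !mxE mulr1 F2sq.
have PQo : P^T *m o = Q^T *m o.
  by apply/matrixP => k l; rewrite (ord1 l) !diag hS.
have key : Q^T *m (Q *m B *m Q^T) *m Q = Q^T *m J *m Q.
  have -> : Q^T *m (Q *m B *m Q^T) *m Q = (Q^T *m Q) *m B *m (Q^T *m Q).
    by rewrite !mulmxA.
  rewrite -hS.
  have -> : P^T *m P *m B *m (P^T *m P) = P^T *m (P *m B *m P^T) *m P.
    by rewrite !mulmxA.
  have L (R : 'M['F_2]_(r, n)) :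
      R^T *m (o *m o^T) *m R = (R^T *m o) *m (R^T *m o)^T.
    by rewrite trmx_mul trmxK !mulmxA.
  by rewrite hPB Jo !L PQo.
have : (W *m C^T)^T *m (Q^T *m (Q *m B *m Q^T) *m Q) *m (W *m C^T)
     = (W *m C^T)^T *m (Q^T *m J *m Q) *m (W *m C^T) by rewrite key.
have QVt : (W *m C^T)^T *m Q^T = 1%:M by rewrite -trmx_mul QV trmx1.
rewrite !mulmxA QVt mul1mx -!mulmxA QV !mulmx1 => E i j.
by rewrite bform_entry -mulmxA E mul1mx mxE.
Qed.
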